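(* Let $R$ be a unital amenable affine algebra over a field $K$, with a fixed Følner exhaustion $\{W_n\}_{n\ge1}$ and a fixed ultralimit $\lim_\omega$. For a finitely generated left $R$-module $M=\sum_{i=1}^r Rx_i$, the quantity $$\mathrm{rank}(M)=\lim_\omega\frac{\dim_K(W_nx_1+\cdots+W_nx_r)}{\dim_K(W_n)}$$ does not depend on the choice of the generating set $\{x_1,\dots,x_r\}$ of $M$. Moreover, $\mathrm{rank}(M)$ is at most the minimal number of elements generating $M$ as an $R$-module.
   Context: An affine algebra is a finitely generated associative algebra over $K$. A Følner exhaustion is a sequence of finite-dimensional $K$-subspaces $W_1\subseteq W_2\subseteq\cdots$ with $\bigcup_nW_n=R$ such that for every $r\in R$, $\lim_{n\to\infty}\dim_K(W_nr+W_n)/\dim_K(W_n)=1$; $R$ is amenable if one exists. $\omega$ is an ultrafilter on $\mathbb N$ and $\lim_\omega:\ell^\infty(\mathbb N)\to\mathbb R$ the corresponding linear functional with $\liminf a_n\le\lim_\omega a_n\le\limsup a_n$, agreeing with the usual limit on convergent sequences. $W_nx=\{wx:w\in W_n\}$. *)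

(* Defs.v *)
From HB Require Import structures.
From mathcomp Require Import all_boot all_order all_algebra.
From mathcomp Require Import all_classical all_reals all_analysis.
Set Implicit Arguments. Unset Strict Implicit. Unset Printing Implicit Defensive.
Import Order.TTheory GRing.Theory Num.Theory numFieldNormedType.Exports.
Local Open Scope classical_set_scope.
Local Open Scope ring_scope.

Section LinAlg.
(* A K-vector space structure on an additive group V given by an explicit
   scalar action [act] (used both for R, with k *: r, and for an R-module M,
   with (k%:A) *: m). *)
Variables (K : fieldType) (V : zmodType) (act : K -> V -> V).

Definition lincomb (s : seq V) (c : nat -> K) : V :=
  \sum_(i < size s) act (c i) s`_i.

Definition span_act (s : seq V) : set V :=
  [set v | exists c, v = lincomb s c].

Definition free_act (s : seq V) : Prop :=
  forall c, lincomb s c = 0 -> forall i, (i < size s)%N -> c i = 0.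

Definition has_dim (W : set V) (n : nat) : Prop :=
  exists s, size s = n /\ free_act s /\ span_act s = W.

(* dim_K W (junk value 0 if W is not a finite-dimensional subspace) *)
Definition dim_act (W : set V) : nat := xget 0%N [set n | has_dim W n].

Definition subspace_act (W : set V) : Prop :=
  W 0 /\ (forall u v, W u -> W v -> W (u + v)) /\
  (forall k v, W v -> W (act k v)).

Definition findim_subspace (W : set V) : Prop :=
  subspace_act W /\ exists n, has_dim W n.
End LinAlg.

Section Algebra.
Variables (K : fieldType) (R : algType K).

Definition scaleK (k : K) (r : R) : R := k *: r.

Definition affine_algebra : Prop :=
  exists g : seq R, forall S : set R,
    S 1 -> (forall u v, S u -> S v -> S (u + v)) ->
    (forall u v, S u -> S v -> S (u * v)) ->
    (forall k u, S u -> S (k *: u)) ->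
    (forall x, x \in g -> S x) -> S = setT.

Definition dimR (W : set R) : nat := dim_act scaleK W.

Definition WrW (W : set R) (r : R) : set R :=
  [set v | exists w1 w2, W w1 /\ W w2 /\ v = w1 * r + w2].

Definition folner_exhaustion (Rr : realType) (W : nat -> set R) : Prop :=
  (forall n, findim_subspace scaleK (W n)) /\
  (forall n, W n `<=` W n.+1) /\
  (\bigcup_n W n = setT) /\
  (forall r : R, (fun n => (dimR (WrW (W n) r))%:R / (dimR (W n))%:R : Rr)
                   @ \oo --> (1 : Rr)).

Variable (M : lmodType R).

Definition scaleKM (k : K) (m : M) : M := (k%:A) *: m.

Definition dimM (U : set M) : nat := dim_act scaleKM U.

Definition generates (xs : seq M) : Prop :=
  forall m : M, exists c : nat -> R, m = \sum_(i < size xs) c i *: xs`_i.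

Definition Wspan (W : set R) (xs : seq M) : set M :=
  [set m | exists w : nat -> R, (forall i, (i < size xs)%N -> W (w i)) /\
                        m = \sum_(i < size xs) w i *: xs`_i].

Definition rank_wrt (Rr : realType) (W : nat -> set R) (om : set_system nat)
  (xs : seq M) : Rr :=
  lim ((fun n => (dimM (Wspan (W n) xs))%:R / (dimR (W n))%:R : Rr) @ om).
End Algebra.

(* Main.v *)
Require Import Defs.
From HB Require Import structures.
From mathcomp Require Import all_boot all_order all_algebra.
From mathcomp Require Import all_classical all_reals all_analysis.
From mathcomp Require Import lra.
Import Order.TTheory GRing.Theory Num.Theory numFieldNormedType.Exports.
Local Open Scope classical_set_scope.
Local Open Scope ring_scope.
Set Implicit Arguments. Unset Strict Implicit. Unset Printing Implicit Defensive.

Section Lin.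
Variables (K : fieldType) (V : zmodType) (act : K -> V -> V).
Hypotheses (actA : forall a b v, act a (act b v) = act (a * b) v)
 (act1 : forall v, act 1 v = v)
 (actDl : forall a b v, act (a + b) v = act a v + act b v)
 (actDr : forall a u v, act a (u + v) = act a u + act a v).

Set Default Proof Using "All".
Lemma act0 v : act 0 v = 0.
Proof. have h := actDl 0 0 v; rewrite addr0 in h.
by apply: (addrI (act 0 v)); rewrite -h addr0. Qed.
Lemma actr0 a : act a 0 = 0.
Proof. have h := actDr a 0 0; rewrite addr0 in h.
by apply: (addrI (act a 0)); rewrite -h addr0. Qed.
Lemma actN a v : act a (- v) = - act a v.
Proof. by apply/eqP; rewrite -addr_eq0 -actDr addNr actr0. Qed.
Lemma act_sum a I (r : seq I) (P : pred I) F :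
  act a (\sum_(i <- r | P i) F i) = \sum_(i <- r | P i) act a (F i).
Proof. exact: (big_morph _ (actDr a) (actr0 a)). Qed.
Lemma act_suml v I (r : seq I) (P : pred I) F :
  act (\sum_(i <- r | P i) F i) v = \sum_(i <- r | P i) act (F i) v.
Proof. exact: (big_morph (fun a => act a v) (fun a b => actDl a b v) (act0 v)). Qed.

Notation lc := (lincomb act).
Notation span := (span_act act).
Notation free := (free_act act).

Lemma lincomb_ext s c d : (forall i, (i < size s)%N -> c i = d i) ->
  lc s c = lc s d.
Proof. by move=> h; apply: eq_bigr => i _; rewrite h. Qed.

Lemma lincomb_nil c : lc [::] c = 0.
Proof. by rewrite /lincomb big_ord0. Qed.

Lemma lincomb_cons x s c : lc (x :: s) c = act (c 0%N) x + lc s (fun i => c i.+1).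
Proof. by rewrite /lincomb big_ord_recl /=; congr (_ + _); apply: eq_bigr => i _; rewrite lift0. Qed.

Lemma lincomb_cat s t c :
  lc (s ++ t) c = lc s c + lc t (fun i => c (size s + i)%N).
Proof.
elim: s c => [|x s IH] c /=; first by rewrite lincomb_nil add0r.
by rewrite !lincomb_cons IH addrA.
Qed.

Lemma lincomb_add s c d : lc s (fun i => c i + d i) = lc s c + lc s d.
Proof. by rewrite /lincomb -big_split; apply: eq_bigr => i _; rewrite actDl. Qed.

Lemma lincomb_scale a s c : act a (lc s c) = lc s (fun i => a * c i).
Proof. by rewrite /lincomb act_sum; apply: eq_bigr => i _; rewrite actA. Qed.

Lemma span0 s : span s 0.
Proof. by exists (fun _ => 0); rewrite /lincomb big1 // => i _; rewrite act0. Qed.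
Lemma spanD s u v : span s u -> span s v -> span s (u + v).
Proof. by move=> [c ->] [d ->]; exists (fun i => c i + d i); rewrite lincomb_add. Qed.
Lemma spanZ s a v : span s v -> span s (act a v).
Proof. by move=> [c ->]; exists (fun i => a * c i); rewrite lincomb_scale. Qed.
Lemma span_sum s I (r : seq I) (P : pred I) F :
  (forall i, P i -> span s (F i)) -> span s (\sum_(i <- r | P i) F i).
Proof. by move=> h; apply: (big_ind (span s)) => //; [exact: span0|exact: spanD]. Qed.

Lemma span_nil v : span [::] v <-> v = 0.
Proof. by split => [[c ->]|->]; [rewrite lincomb_nil|exact: span0]. Qed.

Lemma span_cat s t v : span (s ++ t) v <->
  exists u w, span s u /\ span t w /\ v = u + w.
Proof.
split=> [[c ->]|[u [w [[c ->] [[d ->] ->]]]]].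
  rewrite lincomb_cat; exists (lc s c), (lc t (fun i => c (size s + i)%N)).
  by split; [exists c|split; [eexists|]].
exists (fun i => if (i < size s)%N then c i else d (i - size s)%N).
rewrite lincomb_cat; congr (_ + _); apply: lincomb_ext => i Hi.
  by rewrite Hi.
by rewrite ltnNge leq_addr /= addKn.
Qed.

Lemma span_one x v : span [:: x] v <-> exists a, v = act a x.
Proof.
split=> [[c ->]|[a ->]]; first by exists (c 0%N); rewrite lincomb_cons lincomb_nil addr0.
by exists (fun _ => a); rewrite lincomb_cons lincomb_nil addr0.
Qed.

Lemma span_cons x s v : span (x :: s) v <->
  exists a u, span s u /\ v = act a x + u.
Proof.
rewrite -cat1s span_cat; split.
  by move=> [u [w [/span_one [a ->] [Hw ->]]]]; exists a, w.
by move=> [a [u [Hu ->]]]; exists (act a x), u; split => //; apply/span_one; exists a.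
Qed.

Lemma span_mem s i : (i < size s)%N -> span s s`_i.
Proof.
elim: s i => [|x s IH] [|i] //= Hi; apply/span_cons.
  by exists 1, 0; split; [exact: span0|rewrite act1 addr0].
by exists 0, s`_i; split; [exact: IH|rewrite act0 add0r].
Qed.


Lemma actNl1 v : act (-1) v = - v.
Proof. by apply/eqP; rewrite -addr_eq0 -{2}(act1 v) -actDl addNr act0. Qed.

Lemma span_min (S : set V) s : S 0 -> (forall u v, S u -> S v -> S (u + v)) ->
  (forall a v, S v -> S (act a v)) -> (forall i, (i < size s)%N -> S s`_i) ->
  span s `<=` S.
Proof.
move=> S0 SD SZ Ss _ [c ->]; rewrite /lincomb.
by apply: (big_ind S) => // i _; apply: SZ; apply: Ss.
Qed.

Lemma span_sub t s : (forall i, (i < size t)%N -> span s t`_i) -> span t `<=` span s.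
Proof. by apply: span_min; [exact: span0|exact: spanD|exact: spanZ]. Qed.

Lemma span_cons_mem x s : span s x -> span (x :: s) = span s.
Proof.
move=> hx; apply/seteqP; split; apply: span_sub.
  by case=> [|i] //= Hi; apply: span_mem.
by move=> i Hi; exact: (span_mem (s := x :: s) (i := i.+1) Hi).
Qed.

Lemma span_cat_eq t s s' : span s = span s' -> span (t ++ s) = span (t ++ s').
Proof.
move=> e; apply/seteqP; split => v /span_cat [u [w [hu [hw ->]]]];
  apply/span_cat; exists u, w; rewrite ?e // -?e //.
Qed.

Lemma free_nil : free [::].
Proof. by move=> c _ i. Qed.

Lemma free_cons x s : free s -> ~ span s x -> free (x :: s).
Proof.
move=> fs nx c; rewrite lincomb_cons => h.
have c0 : c 0%N = 0.
  case: (eqVneq (c 0%N) 0) => // nz; exfalso; apply: nx.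
  move/eqP: h; rewrite addr_eq0 => /eqP e.
  have -> : x = act (c 0%N)^-1 (act (c 0%N) x) by rewrite actA mulVf // act1.
  rewrite e -actNl1; apply: spanZ; apply: spanZ; eexists; reflexivity.
rewrite c0 act0 add0r in h.
by case=> [|i] //= Hi; apply: (fs _ h i).
Qed.

Lemma steinitz s t : free t -> (forall j, (j < size t)%N -> span s t`_j) ->
  (size t <= size s)%N.
Proof.
move=> ft hs; rewrite leqNgt; apply/negP => lt.
have [a ha] : {a : nat -> nat -> K & forall j, (j < size t)%N -> t`_j = lc s (a j)}.
  apply: (@choice nat (nat -> K) (fun j a => (j < size t)%N -> t`_j = lc s a)) => j.
  case: (ltnP j (size t)) => [/hs [c ->]|hj]; first by exists c.
  by exists (fun _ => 0).
pose n := size t; pose m := size s.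
pose A : 'M[K]_(n, m) := \matrix_(j, i) a j i.
have kA : kermx A != 0.
  rewrite -mxrank_eq0 mxrank_ker subn_eq0 -ltnNge.
  exact: leq_ltn_trans (rank_leq_col A) lt.
have [i0 nz] : exists i, row i (kermx A) != 0.
  case: (pselect (exists i, row i (kermx A) != 0)) => // H; exfalso.
  move/negP: kA; apply; apply/eqP/row_matrixP => i; rewrite row0.
  by case: (eqVneq (row i (kermx A)) 0) => // hi; exfalso; apply: H; exists i.
set v := row i0 (kermx A).
have vA : v *m A = 0 by rewrite /v -row_mul mulmx_ker row0.
pose c j := if insub j is Some k then v 0 k else 0.
have cE (k : 'I_n) : c k = v 0 k by rewrite /c valK.
have h : lc t c = 0.
  rewrite /lincomb.
  transitivity (\sum_(k < n) \sum_(i < m) act (v 0 k * a k i) s`_i).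
    apply: eq_bigr => k _; rewrite cE ha // /lincomb act_sum.
    by apply: eq_bigr => i _; rewrite actA.
  rewrite exchange_big /=; apply: big1 => i _.
  rewrite -act_suml.
  have -> : \sum_(k < n) v 0 k * a k i = (v *m A) 0 i.
    by rewrite [RHS]mxE; apply: eq_bigr => k _; rewrite /A [X in _ = _ * X]mxE.
  by rewrite vA mxE act0.
move/negP: nz; apply; apply/eqP/rowP => k; rewrite [RHS]mxE -cE.
exact: (ft c h k (ltn_ord k)).
Qed.

Lemma has_dim_uniq W n m : has_dim act W n -> has_dim act W m -> n = m.
Proof.
move=> [b [<- [fb sb]]] [b' [<- [fb' sb']]]; apply/eqP; rewrite eqn_leq.
apply/andP; split; apply: steinitz => // j Hj.
  by rewrite sb' -sb; apply: span_mem.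
by rewrite sb -sb'; apply: span_mem.
Qed.

Lemma dimE W n : has_dim act W n -> dim_act act W = n.
Proof.
move=> h; apply: xget_unique => // m hm; exact: has_dim_uniq hm h.
Qed.

Lemma basis_span s : exists b, free b /\ span b = span s /\ (size b <= size s)%N.
Proof.
elim: s => [|x s [b [fb [sb lb]]]]; first by exists [::]; split; [exact: free_nil|].
case: (pselect (span b x)) => hx.
  exists b; split => //; split; last by apply: leqW.
  by rewrite span_cons_mem -sb.
exists (x :: b); split; first exact: free_cons.
by split => //; apply: (span_cat_eq [:: x]).
Qed.

Lemma dim_span s : has_dim act (span s) (dim_act act (span s)) /\
  (dim_act act (span s) <= size s)%N.
Proof.
have [b [fb [sb lb]]] := basis_span s.
have hd : has_dim act (span s) (size b) by exists b.
by rewrite (dimE hd).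
Qed.

Lemma dim_free s : free s -> dim_act act (span s) = size s.
Proof. by move=> fs; apply: dimE; exists s. Qed.

Lemma dim_le (A : set V) t : A `<=` span t -> (dim_act act A <= dim_act act (span t))%N.
Proof.
move=> At; case: (pselect (exists n, has_dim act A n)) => [[n hn]|hn].
  rewrite (dimE hn); have [[p [sp [fp ep]]] _] := dim_span t.
  case: hn => a [<- [fa ea]]; rewrite -sp; apply: steinitz => // j Hj.
  by rewrite ep; apply: At; rewrite -ea; apply: span_mem.
rewrite /dim_act xgetPN //= => n hn'; apply: hn; by exists n.
Qed.

Lemma dim_cat t s : (dim_act act (span (t ++ s)) <= size t + dim_act act (span s))%N.
Proof.
have [[p [sp [fp ep]]] _] := dim_span s.
rewrite -sp -(span_cat_eq t ep).
by have [_ ] := dim_span (t ++ p); rewrite size_cat.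
Qed.

Lemma extend t b : free b -> exists e, span (e ++ b) = span (t ++ b) /\ free (e ++ b).
Proof.
move=> fb; elim: t => [|x t [e [se fe]]]; first by exists [::].
case: (pselect (span (e ++ b) x)) => hx.
  by exists e; split => //; rewrite cat_cons span_cons_mem -se.
exists (x :: e); split; first by rewrite !cat_cons; apply: (span_cat_eq [:: x]).
by rewrite cat_cons; apply: free_cons.
Qed.

Lemma span_mem_in s x : x \in s -> span s x.
Proof. by move=> h; rewrite -(nth_index 0 h); apply: span_mem; rewrite index_mem. Qed.

End Lin.
Unset Default Proof Using.

Section Alg.
Variables (K : fieldType) (R : algType K) (M : lmodType R).

Notation spanR := (span_act (@scaleK K R)).
Notation spanM := (span_act (@scaleKM K R M)).

Let aA : forall a b (v : R), scaleK a (scaleK b v) = scaleK (a * b) v.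
Proof. by move=> *; rewrite /scaleK scalerA. Qed.
Let a1 : forall (v : R), scaleK 1 v = v.
Proof. by move=> *; rewrite /scaleK scale1r. Qed.
Let aDl : forall a b (v : R), scaleK (a + b) v = scaleK a v + scaleK b v.
Proof. by move=> *; rewrite /scaleK scalerDl. Qed.
Let aDr : forall a (u v : R), scaleK a (u + v) = scaleK a u + scaleK a v.
Proof. by move=> *; rewrite /scaleK scalerDr. Qed.

Let mA : forall a b (v : M), scaleKM a (scaleKM b v) = scaleKM (a * b) v.
Proof. by move=> *; rewrite /scaleKM scalerA mulr_algl scalerA. Qed.
Let m1 : forall (v : M), scaleKM 1 v = v.
Proof. by move=> *; rewrite /scaleKM scale1r scale1r. Qed.
Let mDl : forall a b (v : M), scaleKM (a + b) v = scaleKM a v + scaleKM b v.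
Proof. by move=> *; rewrite /scaleKM !scalerDl. Qed.
Let mDr : forall a (u v : M), scaleKM a (u + v) = scaleKM a u + scaleKM a v.
Proof. by move=> *; rewrite /scaleKM scalerDr. Qed.

Lemma scaleKM_scale k (w : R) (x : M) : scaleKM k (w *: x) = (k *: w) *: x.
Proof. by rewrite /scaleKM scalerA mulr_algl. Qed.

Lemma lincomb_mapr (b : seq R) c k :
  lincomb (@scaleK K R) (map (fun w => w * c) b) k = lincomb (@scaleK K R) b k * c.
Proof.
rewrite /lincomb size_map mulr_suml; apply: eq_bigr => i _.
by rewrite (nth_map 0) // /scaleK scalerAl.
Qed.

Lemma WrW_eq (b : seq R) c : WrW (spanR b) c = spanR (map (fun w => w * c) b ++ b).
Proof.
apply/seteqP; split => v.
  move=> [w1 [w2 [[k ->] [h2 ->]]]]; apply/(span_cat aA a1 aDl aDr).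
  exists (lincomb (@scaleK K R) b k * c), w2; split => //.
  by exists k; rewrite lincomb_mapr.
move/(span_cat aA a1 aDl aDr) => [u [w [[k ->] [hw ->]]]].
exists (lincomb (@scaleK K R) b k), w; split; first by exists k.
by split => //; rewrite lincomb_mapr.
Qed.

Lemma Wspan_single (W : set R) (xs : seq M) a i : W 0 -> W a -> (i < size xs)%N ->
  Wspan W xs (a *: xs`_i).
Proof.
move=> W0 Wa Hi; exists (fun l => if l == i then a else 0); split.
  by move=> l _; case: ifP.
rewrite (bigD1 (Ordinal Hi)) //= eqxx big1 ?addr0 // => l /negbTE hl.
by rewrite -[nat_of_ord l == i]/(val l == val (Ordinal Hi)) val_eqE hl scale0r.
Qed.

Lemma Wspan_eq (b : seq R) (xs : seq M) :
  Wspan (spanR b) xs = spanM [seq w *: x | w <- b, x <- xs].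
Proof.
apply/seteqP; split => v.
  move=> [w [hw ->]]; apply: (span_sum mA m1 mDl mDr) => i _.
  have [k ek] := hw i (ltn_ord i); rewrite ek /lincomb scaler_suml.
  apply: (span_sum mA m1 mDl mDr) => j _.
  rewrite /scaleK -scaleKM_scale; apply: (spanZ mA m1 mDl mDr).
  apply: (span_mem_in mA m1 mDl mDr). apply: (allpairs_f (fun (w : R) (x : M) => w *: x)); apply: mem_nth => //.
move: v; apply: (span_min mA m1 mDl mDr).
- by exists (fun _ => 0); split => [i _|]; [exact: (span0 aA a1 aDl aDr)|rewrite big1 // => i _; rewrite scale0r].
- move=> u1 u2 [w1 [h1 ->]] [w2 [h2 ->]]; exists (fun i => w1 i + w2 i); split.
    by move=> i Hi; apply: (spanD aA a1 aDl aDr); [exact: h1|exact: h2].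
  by rewrite -big_split; apply: eq_bigr => i _; rewrite scalerDl.
- move=> k u [w [h ->]]; exists (fun i => k *: w i); split.
    by move=> i Hi; exact: (spanZ aA a1 aDl aDr k (h i Hi)).
  rewrite /scaleKM scaler_sumr; apply: eq_bigr => i _.
  by rewrite -/(scaleKM k _) scaleKM_scale.
- move=> i Hi; have /allpairsP [[p1 p2] [/= h1 h2 ->]] := mem_nth 0 Hi.
  rewrite -(nth_index 0 h2); apply: Wspan_single.
  + exact: (span0 aA a1 aDl aDr).
  + exact: (span_mem_in aA a1 aDl aDr).
  + by rewrite index_mem.
Qed.

Lemma bound_dim (b : seq R) (xs : seq M) :
  (dimM (Wspan (spanR b) xs) <= size xs * size b)%N.
Proof.
rewrite /dimM Wspan_eq; have [_ h] := dim_span mA m1 mDl mDr [seq w *: x | w <- b, x <- xs].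
by rewrite size_allpairs mulnC in h.
Qed.

Lemma compare (xs ys : seq M) : generates xs -> exists cs : seq R,
  forall b : seq R, free_act (@scaleK K R) b ->
  (dimM (Wspan (spanR b) ys) <= dimM (Wspan (spanR b) xs) +
     size xs * \sum_(c <- cs) (dimR (WrW (spanR b) c) - size b))%N.
Proof.
move=> gx.
have [cy hcy] : {cy : nat -> nat -> R & forall j, ys`_j = \sum_(i < size xs) cy j i *: xs`_i}.
  by apply: (@choice nat (nat -> R) (fun j c => ys`_j = \sum_(i < size xs) c i *: xs`_i)) => j; exact: gx.
exists [seq cy j i | j <- iota 0 (size ys), i <- iota 0 (size xs)] => b fb.
set cs := [seq cy j i | j <- _, i <- _].
have [ef hef] : {ef : R -> seq R & forall c, spanR (ef c ++ b) = spanR (map (fun w => w * c) b ++ b) /\ free_act (@scaleK K R) (ef c ++ b)}.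
  apply: (@choice R (seq R) (fun c e => spanR (e ++ b) = spanR (map (fun w => w * c) b ++ b) /\ free_act (@scaleK K R) (e ++ b))) => c.
  exact: (extend aA a1 aDl aDr _ fb).
set E := flatten (map ef cs).
have hsz c : size (ef c) = (dimR (WrW (spanR b) c) - size b)%N.
  by rewrite /dimR WrW_eq -(hef c).1 (dim_free aA a1 aDl aDr (hef c).2) size_cat addnK.
have sub : Wspan (spanR b) ys `<=` Wspan (spanR (E ++ b)) xs.
  move=> _ [w [hw ->]].
  exists (fun i => \sum_(j < size ys) w j * cy j i); split.
    move=> i Hi; apply: (span_sum aA a1 aDl aDr) => j _.
    set c := cy j i.
    have hc : c \in cs by apply: allpairs_f; rewrite mem_iota /= ?add0n.
    have : WrW (spanR b) c (w j * c).
      exists (w j), 0; split; first exact: hw.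
      by split; [exact: (span0 aA a1 aDl aDr)|rewrite addr0].
    rewrite WrW_eq -(hef c).1; apply: (span_sub aA a1 aDl aDr) => l Hl.
    apply: (span_mem_in aA a1 aDl aDr); have := mem_nth 0 Hl.
    rewrite !mem_cat => /orP [h|->]; last by rewrite orbT.
    by apply/orP; left; apply/flatten_mapP; exists c.
  transitivity (\sum_(j < size ys) \sum_(i < size xs) (w j * cy j i) *: xs`_i).
    by apply: eq_bigr => j _; rewrite hcy scaler_sumr; apply: eq_bigr => i _; rewrite scalerA.
  by rewrite exchange_big /=; apply: eq_bigr => i _; rewrite scaler_suml.
rewrite (Wspan_eq (E ++ b)) allpairs_cat in sub.
have h1 := dim_le mA m1 mDl mDr sub.
have h2 := dim_cat mA m1 mDl mDr [seq w *: x | w <- E, x <- xs] [seq w *: x | w <- b, x <- xs].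
rewrite /dimM (Wspan_eq b xs); apply: (leq_trans h1); apply: (leq_trans h2).
rewrite size_allpairs addnC leq_add2l mulnC leq_mul2l; apply/orP; right.
rewrite /E size_flatten /shape -map_comp sumnE big_map.
by apply/eq_leq/eq_bigr => c _; rewrite /= hsz.
Qed.

End Alg.

Section Final.
Variables (K : fieldType) (R : algType K) (Rr : realType) (W : nat -> set R) (M : lmodType R).
Hypothesis hF : folner_exhaustion Rr W.

Notation spanR := (span_act (@scaleK K R)).

Let aA : forall a b (v : R), scaleK a (scaleK b v) = scaleK (a * b) v.
Proof. by move=> *; rewrite /scaleK scalerA. Qed.
Let a1 : forall (v : R), scaleK 1 v = v.
Proof. by move=> *; rewrite /scaleK scale1r. Qed.
Let aDl : forall a b (v : R), scaleK (a + b) v = scaleK a v + scaleK b v.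
Proof. by move=> *; rewrite /scaleK scalerDl. Qed.
Let aDr : forall a (u v : R), scaleK a (u + v) = scaleK a u + scaleK a v.
Proof. by move=> *; rewrite /scaleK scalerDr. Qed.

Definition fr (us : seq M) n : Rr := (dimM (Wspan (W n) us))%:R / (dimR (W n))%:R.
Definition err (us : seq M) (cs : seq R) n : Rr :=
  (size us)%:R * \sum_(c <- cs) ((dimR (WrW (W n) c))%:R / (dimR (W n))%:R - 1).

Lemma hb n : exists b, free_act (@scaleK K R) b /\ spanR b = W n.
Proof.
have [_ [k [b [_ [fb sb]]]]] := hF.1 n; by exists b.
Qed.

Lemma Hcmp (us vs : seq M) : generates us -> exists cs : seq R, forall n,
  (dimM (Wspan (W n) vs) <= dimM (Wspan (W n) us) +
    size us * \sum_(c <- cs) (dimR (WrW (W n) c) - dimR (W n)))%N.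
Proof.
move=> gu; have [cs hcs] := compare vs gu; exists cs => n.
have [b [fb sb]] := hb n; rewrite -sb /dimR (dim_free aA a1 aDl aDr fb).
exact: hcs.
Qed.

Lemma Hbd (us : seq M) n : (dimM (Wspan (W n) us) <= size us * dimR (W n))%N.
Proof.
have [b [fb sb]] := hb n; rewrite -sb /dimR (dim_free aA a1 aDl aDr fb).
exact: bound_dim.
Qed.

Lemma Hmono n c : (dimR (W n) <= dimR (WrW (W n) c))%N.
Proof.
have [b [fb sb]] := hb n; rewrite -sb WrW_eq /dimR.
apply: (dim_le aA a1 aDl aDr); apply: (span_sub aA a1 aDl aDr) => i Hi.
by apply: (span_mem_in aA a1 aDl aDr); rewrite mem_cat (mem_nth 0 Hi) orbT.
Qed.

Lemma dpos_near : \forall n \near \oo, (0 < dimR (W n))%N.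
Proof.
have h := hF.2.2.2 0.
have H := @cvgr_gt _ _ _ eventually_filter _ 1 h 0 ltr01; move: H; apply: (filterS (Filter := eventually_filter)) => n.
rewrite lt0n; case: eqP => // ->; by rewrite invr0 mulr0 ltxx.
Qed.

Lemma cvg_sum0 (cs : seq R) (u : R -> nat -> Rr) : (forall c, u c @ \oo --> 0) ->
  (fun n => \sum_(c <- cs) u c n) @ \oo --> 0.
Proof.
move=> hu; elim: cs => [|c cs IH].
  have -> : (fun n => \sum_(c0 <- [::]) u c0 n) = (fun _ => 0 : Rr).
    by apply: funext => n; rewrite big_nil.
  exact: cvg_cst.
have -> : (fun n => \sum_(c0 <- c :: cs) u c0 n) = (fun n => u c n + \sum_(c0 <- cs) u c0 n).
  by apply: funext => n; rewrite big_cons.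
have H := @cvgD _ _ _ _ eventually_filter _ _ _ _ (hu c) IH; rewrite addr0 in H; exact: H.
Qed.

Lemma cvg_err us cs : err us cs @ \oo --> 0.
Proof.
rewrite -(mulr0 (size us)%:R); apply: cvgMl_tmp; apply: cvg_sum0 => c.
by apply/subr_cvg0; exact: (hF.2.2.2 c).
Qed.

Lemma ineq (us vs : seq M) : generates us -> exists cs, forall n, (0 < dimR (W n))%N ->
  fr vs n <= fr us n + err us cs n.
Proof.
move=> gu; have [cs hcs] := Hcmp vs gu; exists cs => n dpos.
have dR : (0 : Rr) < (dimR (W n))%:R by rewrite ltr0n.
have e : fr us n + err us cs n = ((dimM (Wspan (W n) us) +
    size us * \sum_(c <- cs) (dimR (WrW (W n) c) - dimR (W n)))%N)%:R / (dimR (W n))%:R.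
  rewrite natrD natrM natr_sum mulrDl -mulrA mulr_suml; congr (_ + _ * _).
  by apply: eq_bigr => c _; rewrite natrB ?Hmono // mulrBl divff // gt_eqF.
rewrite e /fr ler_pM2r ?invr_gt0 // ler_nat; exact: hcs.
Qed.

Lemma diff_cvg0 (xs ys : seq M) : generates xs -> generates ys ->
  (fun n => fr ys n - fr xs n) @ \oo --> 0.
Proof.
move=> gx gy; have [cs1 h1] := ineq ys gx; have [cs2 h2] := ineq xs gy.
apply: (@squeeze_cvgr _ _ _ _ (fun n => - err ys cs2 n) (err xs cs1)).
- near=> n; have dp : (0 < dimR (W n))%N by near: n; exact: dpos_near.
  have := h1 n dp; have := h2 n dp.
  set a := fr xs n; set b := fr ys n; set e1 := err xs cs1 n; set e2 := err ys cs2 n.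
  move=> H2 H1; apply/andP; split; lra.
- by rewrite -oppr0; apply: cvgN; exact: cvg_err.
- exact: cvg_err.
Unshelve. all: by end_near.
Qed.

Lemma fr_le us n : fr us n <= (size us)%:R.
Proof.
rewrite /fr; case: (posnP (dimR (W n))) => [->|dp]; first by rewrite invr0 mulr0 ler0n.
by rewrite ler_pdivrMr ?ltr0n // -natrM ler_nat; exact: Hbd.
Qed.

Lemma main (om : set_system nat) (hU : UltraFilter om) (hoo : (\oo : set_system nat) `<=` om)
  (xs ys : seq M) : generates xs -> generates ys ->
  rank_wrt Rr W om xs = rank_wrt Rr W om ys /\ rank_wrt Rr W om xs <= (size ys)%:R.
Proof.
move=> gx gy.
have hg := diff_cvg0 gx gy.
have hgom : (fun n => fr ys n - fr xs n) @ om --> 0 by move=> A /hg; apply: hoo.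
have eqr : rank_wrt Rr W om xs = rank_wrt Rr W om ys.
  rewrite /rank_wrt /lim /lim_in; congr (get _); apply: funext => l; apply: propext; split => h.
  - have H : (fun n => fr xs n + (fr ys n - fr xs n)) @ om --> l + 0 by apply: cvgD.
    have E : (fun n => fr xs n + (fr ys n - fr xs n)) = fr ys.
      by apply: funext => n; rewrite addrC subrK.
    by rewrite E addr0 in H; exact: H.
  - have H : (fun n => fr ys n - (fr ys n - fr xs n)) @ om --> l - 0 by apply: cvgB.
    have E : (fun n => fr ys n - (fr ys n - fr xs n)) = fr xs.
      by apply: funext => n; rewrite opprB addrC subrK.
    by rewrite E subr0 in H; exact: H.
split => //.
rewrite eqr /rank_wrt /lim /lim_in; case: xgetP => [l _ hl|_]; last exact: ler0n.
apply: (@closed_cvg _ _ _ ultra_proper _ (fun x : Rr => x <= (size ys)%:R) (@closed_le Rr (size ys)%:R) _ l hl).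
by apply: nearW => n; exact: fr_le.
Qed.

End Final.

Unset Implicit Arguments.

Theorem proposition7 (K : fieldType) (R : algType K) (Rr : realType)
  (W : nat -> set R) (om : set_system nat) (M : lmodType R) (xs ys : seq M) :
  affine_algebra R ->
  folner_exhaustion Rr W ->
  UltraFilter om -> (\oo : set_system nat) `<=` om ->
  generates xs -> generates ys ->
  rank_wrt Rr W om xs = rank_wrt Rr W om ys /\
  rank_wrt Rr W om xs <= (size ys)%:R.
Proof.
move=> _ hF hU hoo gx gy; exact: (main hF hU hoo gx gy).
Qed.
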